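(* Let $\mathbf A$ be a regular BBL transformation of bandwidth $(p,q)$, and let $z_1,\dots,z_n$ be the distinct nonzero roots of $\det A(w,w^{-1})$ with multiplicities $s_1,\dots,s_n$. Then the space of square-summable solutions of the half-infinite bulk equation is $$\mathcal M_{1,\infty}\cap\mathcal H=\mathcal F_1^-\oplus\mathbf P_{1,\infty}\bigoplus_{\ell:\,|z_\ell|<1}\big(\ker\mathbf A\cap\mathcal T_{z_\ell,s_\ell}\big).$$
   Context: Fix $d\ge1$, $e_m$ the standard basis of $\mathbb C^d$. $\mathcal V^S_d$: doubly infinite sequences $\Psi=\{\psi_j\}_{j\in\mathbb Z}$, $\psi_j\in\mathbb C^d$. A matrix Laurent polynomial of bandwidth $(p,q)$ is $A(w,w^{-1})=\sum_{r=p}^qa_rw^r$, integers $p\le q$, $a_r$ complex $d\times d$, $a_p\ne0\ne a_q$; its BBL transformation is $(\mathbf A\Psi)_j=\sum_ra_r\psi_{j+r}$; $\mathbf T$ is the left shift $(\mathbf T\Psi)_j=\psi_{j+1}$. $\mathbf A$ is regular if $\det(w^{-p}A(w,w^{-1}))$ is not the zero polynomial. $p'=\min(p,0)$, $q'=\max(0,q)$. $\mathcal V_{L,R}$ = sequences with $\psi_j=0$ for $j\notin[L,R]$, $\mathbf P_{L,R}$ zeroes entries outside $[L,R]$ ($L,R$ possibly infinite). $\mathcal M_{1,\infty}=\ker(\mathbf P_{1-p',\infty}\mathbf A|_{\mathcal V_{1,\infty}})$ (the solutions in $\mathcal V_{1,\infty}$ of the bulk equation of the infinite BBT transformation $\mathbf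 P_{1,\infty}\mathbf A|_{\mathcal V_{1,\infty}}$). $\mathcal F_1^-=\{\Psi\in\mathcal M_{1,\infty}:(\mathbf P_{1,\infty}\mathbf T)^k\Psi=0\text{ for some }k\ge1\}$. For $z\ne0$, $v\ge1$: $\Phi_{z,v}=\{j^{(v-1)}z^{j-v+1}\}_{j\in\mathbb Z}$ with $j^{(0)}=1$, $j^{(k)}=j(j-1)\cdots(j-k+1)$; $\mathcal T_{z,s}=\operatorname{Span}\{\Phi_{z,v}e_m:1\le v\le s,1\le m\le d\}$. $\mathcal H$ is the set of sequences in $\mathcal V_{1,\infty}$ with $\sum_{j\ge1}\|\psi_j\|^2<\infty$. *)

(* Defs.v *)
From HB Require Import structures.
From mathcomp Require Import all_boot all_order all_algebra.
Set Implicit Arguments. Unset Strict Implicit. Unset Printing Implicit Defensive.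
Import Order.TTheory GRing.Theory Num.Theory.
Local Open Scope ring_scope.

Definition vseq (C : archiClosedFieldType) (d : nat) := int -> 'cV[C]_d.

(* BBL transformation of the Laurent polynomial A(w,w^-1) = sum_{r=p}^q a_r w^r:
   (A Psi)_j = sum_{r=p}^q a_r psi_{j+r}  (p <= q assumed). *)
Definition bbl (C : archiClosedFieldType) (d : nat) (p q : int)
    (a : int -> 'M[C]_d) (psi : vseq C d) : vseq C d :=
  fun j => \sum_(k < (`|q - p|%N).+1) a (p + k%:Z) *m psi (j + (p + k%:Z)).

(* The matrix polynomial w^{-p} A(w,w^{-1}) = sum_{k=0}^{q-p} a_{p+k} w^k,
   and its determinant (a scalar polynomial in w). *)
Definition shifted_symbol_det (C : archiClosedFieldType) (d : nat) (p q : int)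
    (a : int -> 'M[C]_d) : {poly C} :=
  \det (\matrix_(i < d, l < d)
          \sum_(k < (`|q - p|%N).+1) (a (p + k%:Z) i l)%:P * 'X^k).

Definition regular (C : archiClosedFieldType) (d : nat) (p q : int)
    (a : int -> 'M[C]_d) : Prop :=
  shifted_symbol_det p q a != 0.

(* z (nonzero) is a root of det A(w,w^{-1}) = w^{dp} det(w^{-p}A(w,w^{-1})),
   with multiplicity s. *)
Definition nonzero_root_of_det (C : archiClosedFieldType) (d : nat) (p q : int)
    (a : int -> 'M[C]_d) (z : C) : Prop :=
  z != 0 /\ root (shifted_symbol_det p q a) z.

Definition root_mult (C : archiClosedFieldType) (d : nat) (p q : int)
    (a : int -> 'M[C]_d) (z : C) : nat :=
  mup z (shifted_symbol_det p q a).

(* Left shift T and truncation P_{L,R} (L,R possibly infinite: we need the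
   half-infinite versions P_{L,oo}). *)
Definition shiftT (C : archiClosedFieldType) (d : nat) (psi : vseq C d) : vseq C d :=
  fun j => psi (j + 1).

Definition projLinf (C : archiClosedFieldType) (d : nat) (L : int) (psi : vseq C d)
  : vseq C d := fun j => if L <= j then psi j else 0.

Definition in_V1inf (C : archiClosedFieldType) (d : nat) (psi : vseq C d) : Prop :=
  forall j : int, j < 1 -> psi j = 0.

Definition pprime (p : int) : int := Num.min p 0.

Definition M1inf (C : archiClosedFieldType) (d : nat) (p q : int)
    (a : int -> 'M[C]_d) (psi : vseq C d) : Prop :=
  in_V1inf psi /\ projLinf (1 - pprime p) (bbl p q a psi) = (fun _ => 0).

Definition F1minus (C : archiClosedFieldType) (d : nat) (p q : int)
    (a : int -> 'M[C]_d) (psi : vseq C d) : Prop :=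
  M1inf p q a psi /\
  exists k : nat, (1 <= k)%N /\
    iter k (fun phi => projLinf 1 (shiftT phi)) psi = (fun _ => 0).

Definition sqnorm (C : archiClosedFieldType) (d : nat) (v : 'cV[C]_d) : C :=
  \sum_(m < d) `|v m 0| ^+ 2.

(* H: sequences in V_{1,oo} with sum_{j>=1} ||psi_j||^2 < oo (nonnegative terms:
   finiteness of the series = boundedness of the partial sums). *)
Definition in_H (C : archiClosedFieldType) (d : nat) (psi : vseq C d) : Prop :=
  in_V1inf psi /\
  exists M : C, forall N : nat, \sum_(1 <= j < N.+1) sqnorm (psi j%:Z) <= M.

Definition falling (C : archiClosedFieldType) (j : int) (k : nat) : C :=
  \prod_(i < k) ((j - i%:Z)%:~R).

Definition Phi (C : archiClosedFieldType) (z : C) (v : nat) (j : int) : C :=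
  falling C j (v.-1) * z ^ (j - v%:Z + 1).

Definition in_T (C : archiClosedFieldType) (d : nat) (z : C) (s : nat)
    (psi : vseq C d) : Prop :=
  exists c : 'I_s -> 'I_d -> C,
    forall j : int,
      psi j = \sum_(v < s) \sum_(m < d) (c v m * Phi z v.+1 j) *: (delta_mx m 0 : 'cV[C]_d).

Definition in_kerA (C : archiClosedFieldType) (d : nat) (p q : int)
    (a : int -> 'M[C]_d) (psi : vseq C d) : Prop :=
  bbl p q a psi = (fun _ => 0).

(* Main.v *)
Require Import Defs.
From HB Require Import structures.
From mathcomp Require Import all_boot all_order all_algebra.
From mathcomp Require Import ring zify.
From Stdlib Require Import FunctionalExtensionality.
Import Order.TTheory GRing.Theory Num.Theory.
Set Implicit Arguments. Unset Strict Implicit. Unset Printing Implicit Defensive.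
Local Open Scope ring_scope.

Lemma falling0 (C : archiClosedFieldType) j : falling C j 0 = 1.
Proof. by rewrite /falling big_ord0. Qed.

Lemma fallingS (C : archiClosedFieldType) j k :
  falling C j k.+1 = falling C j k * (j - k%:Z)%:~R.
Proof. by rewrite /falling big_ord_recr. Qed.

Lemma falling_shift (C : archiClosedFieldType) j k :
  falling C (j+1) k.+1 = falling C j k.+1 + k.+1%:R * falling C j k.
Proof.
elim: k => [|k IH].
  rewrite !fallingS !falling0 !mul1r !subr0 rmorphD /=; ring.
rewrite fallingS IH [falling C j k.+2]fallingS [falling C j k.+1]fallingS.
rewrite !rmorphB /= !rmorphD /=.
have -> : ((k.+1)%:Z)%:~R = (k.+1)%:R :> C by [].
have -> : ((k)%:Z)%:~R = (k)%:R :> C by [].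
rewrite -[(k.+2)%:R]natr1 -[(k.+1)%:R]natr1. ring.
Qed.

Lemma zexpS (C : archiClosedFieldType) (z : C) (e : int) :
  z != 0 -> z ^ (e + 1) = z ^ e * z.
Proof. by move=> z0; rewrite expfzDr // expr1z. Qed.

Lemma Phi_shift (C : archiClosedFieldType) (z : C) v j : z != 0 ->
  Phi z v.+1 (j+1) = z * Phi z v.+1 j + v%:R * Phi z v j.
Proof.
move=> z0; rewrite /Phi; case: v => [|k] /=.
  rewrite !falling0 mul0r addr0 !mul1r.
  have -> : j + 1 - 1%:Z + 1 = (j - 1%:Z + 1) + 1 by lia.
  by rewrite (@zexpS _ _ (j - 1%:Z + 1)) // mulrC.
rewrite falling_shift.
have -> : j + 1 - (k.+2)%:Z + 1 = j - k%:Z by lia.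
have -> : j - (k.+2)%:Z + 1 = j - k%:Z - 1 by lia.
have -> : j - (k.+1)%:Z + 1 = j - k%:Z by lia.
have -> : z ^ (j - k%:Z) = z ^ (j - k%:Z - 1) * z.
  by rewrite -zexpS // subrK.
ring.
Qed.

Definition qp (C : archiClosedFieldType) (V : lmodType C) (z : C) (s : nat)
  (c : nat -> V) (j : int) : V := \sum_(v < s) Phi z v.+1 j *: c v.

Definition dshift (C : archiClosedFieldType) (V : lmodType C) (z0 z : C) (s : nat)
  (c : nat -> V) : nat -> V :=
  fun v => (z - z0) *: c v + (v.+1)%:R *: (if (v.+1 < s)%N then c v.+1 else 0).

Lemma Phi_dshift (C : archiClosedFieldType) (z0 z : C) v j : z != 0 ->
  Phi z v.+1 (j+1) - z0 * Phi z v.+1 j = (z - z0) * Phi z v.+1 j + v%:R * Phi z v j.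
Proof. by move=> zn; rewrite Phi_shift //; ring. Qed.

Lemma qp_shift (C : archiClosedFieldType) (V : lmodType C) (z0 z : C) s
   (c : nat -> V) j : z != 0 ->
  qp z s c (j+1) - z0 *: qp z s c j = qp z s (dshift z0 z s c) j.
Proof.
move=> z0n; rewrite /qp /dshift scaler_sumr -sumrB.
under eq_bigr => v _ do rewrite scalerA -scalerBl Phi_dshift // scalerDl.
under [RHS]eq_bigr => v _ do rewrite scalerDr !scalerA.
rewrite !big_split /=; congr (_ + _).
  by apply: eq_bigr => v _; rewrite mulrC.
case: s => [|s]; first by rewrite !big_ord0.
rewrite big_ord_recl big_ord_recr /= mul0r scale0r add0r ltnn scaler0 addr0.
apply: eq_bigr => i _; rewrite /bump /= ltnS ltn_ord mulrC.
by rewrite add1n.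
Qed.

Lemma qp0 (C : archiClosedFieldType) (V : lmodType C) z s (c : nat -> V) j :
  (forall v, (v < s)%N -> c v = 0) -> qp z s c j = 0.
Proof. by move=> h; rewrite /qp big1 // => v _; rewrite h // scaler0. Qed.

Lemma qp_top (C : archiClosedFieldType) (V : lmodType C) z s (c : nat -> V) j :
  c s = 0 -> qp z s.+1 c j = qp z s c j.
Proof. by move=> h; rewrite /qp big_ord_recr /= h scaler0 addr0. Qed.

Lemma down_zero (C : archiClosedFieldType) (V : lmodType C) (a : C) (w : nat -> C)
  s (c : nat -> V) : a != 0 ->
  (forall v, (v < s)%N -> a *: c v + w v *: (if (v.+1 < s)%N then c v.+1 else 0) = 0) ->
  forall v, (v < s)%N -> c v = 0.
Proof.
move=> a0 h.
suff H : forall k v, (s - k <= v)%N -> (v < s)%N -> c v = 0.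
  by move=> v vs; apply: (H s) => //; rewrite subnn.
elim=> [|k IH] v h1 h2; first by move: h1; rewrite subn0 leqNgt h2.
have [hv|hv] := leqP (s - k) v; first exact: IH.
have e : (if (v.+1 < s)%N then c v.+1 else 0) = 0.
  case: ifP => // hv1; apply: IH => //; lia.
by move: (h v h2); rewrite e scaler0 addr0 => /eqP; rewrite scaler_eq0 (negPf a0) /= => /eqP.
Qed.

Lemma Phi1 (C : archiClosedFieldType) (z : C) j : Phi z 1 j = z ^ j.
Proof. by rewrite /Phi falling0 mul1r; congr (_ ^ _); lia. Qed.

Lemma qp_indep (C : archiClosedFieldType) (V : lmodType C) (zs : seq C) :
  uniq zs -> (forall z, z \in zs -> z != 0) ->
  forall (s : C -> nat) (c : C -> nat -> V) (N : int),
  (forall j, N <= j -> \sum_(z <- zs) qp z (s z) (c z) j = 0) ->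
  forall z, z \in zs -> forall v, (v < s z)%N -> c z v = 0.
Proof.
move=> uzs nz0 s0.
move: {2}(\sum_(z <- zs) s0 z)%N (leqnn (\sum_(z <- zs) s0 z)%N) => n.
elim: n s0 => [|n IH] s.
  move=> hs c N _ z zin v vs; exfalso.
  move: hs; rewrite (bigD1_seq z) //=; lia.
move=> hs c N hN.
have [/hasP [z1 z1in sz1]|hn] := boolP (has (fun z => 0 < s z)%N zs); last first.
  move=> z zin v vs; exfalso; move/hasPn: hn => /(_ z zin); lia.
pose s' := fun z => if z == z1 then (s z).-1 else s z.
pose c' := fun z => dshift z1 z (s z) (c z).
have hc'top : forall z, z \in zs -> forall j, qp z (s z) (c' z) j = qp z (s' z) (c' z) j.
  move=> z zin j; rewrite /s'; case: eqP => [->|] //.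
  case E: (s z1) sz1 => [|m] // _ /=; apply: qp_top.
  by rewrite /c' /dshift E subrr scale0r add0r ltnn scaler0.
have hs' : (\sum_(z <- zs) s' z <= n)%N.
  move: hs; rewrite (bigD1_seq (F := s) z1) // (bigD1_seq (F := s') z1) //=.
  have -> : (\sum_(i <- zs | i != z1) s' i = \sum_(i <- zs | i != z1) s i)%N.
    by apply: eq_bigr => z zn; rewrite /s' (negPf zn).
  rewrite /s' eqxx; lia.
have hN' : forall j, N <= j -> \sum_(z <- zs) qp z (s' z) (c' z) j = 0.
  move=> j hj.
  rewrite -(eq_big_seq _ (fun z zin => hc'top z zin j)).
  rewrite (eq_big_seq (fun z => qp z (s z) (c z) (j+1) - z1 *: qp z (s z) (c z) j)); last first.
    by move=> z zin; rewrite qp_shift // nz0.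
  rewrite sumrB -scaler_sumr !hN ?scaler0 ?subr0 //; lia.
have IHc := IH s' hs' c' N hN'.
have hne : forall z, z \in zs -> z != z1 -> forall v, (v < s z)%N -> c z v = 0.
  move=> z zin zn1; apply: (@down_zero _ _ (z - z1) (fun v => v.+1%:R)).
    by rewrite subr_eq0.
  move=> v vs; have := IHc z zin v; rewrite /s' (negPf zn1) => /(_ vs).
  by rewrite /c' /dshift.
have h1 : forall v, (0 < v)%N -> (v < s z1)%N -> c z1 v = 0.
  case=> [|v] // _ vs.
  have := IHc z1 z1in v; rewrite /s' eqxx /c' /dshift subrr scale0r add0r vs.
  move=> /(_ ltac:(lia)) /eqP; rewrite scaler_eq0 pnatr_eq0 /=.
  by move/eqP.
move=> z zzin v vs.
have [ez|nz] := eqVneq z z1; last exact: hne.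
subst z; case: v vs => [|v] vs; last exact: h1.
have := hN N (lexx _); rewrite (bigD1_seq z1) //= big1_seq; last first.
  move=> z /andP [zn1 zin2]; apply: qp0; exact: hne.
rewrite addr0; case E: (s z1) sz1 => [|m] // _.
rewrite /qp big_ord_recl big1; last first.
  by move=> i _; rewrite h1 ?scaler0 // E ltn_ord.
rewrite addr0 Phi1 => /eqP; rewrite scaler_eq0 expfz_eq0 (negPf (nz0 _ z1in)) andbF /=.
by move/eqP.
Qed.
Definition act (C : archiClosedFieldType) (V : lmodType C) (P : {poly C})
  (u : int -> V) (j : int) : V := \sum_(i < size P) P`_i *: u (j + i%:Z).

Lemma act_widen (C : archiClosedFieldType) (V : lmodType C) (P : {poly C}) (u : int -> V) (j : int) n :
  (size P <= n)%N -> act P u j = \sum_(i < n) P`_i *: u (j + i%:Z).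
Proof.
move=> hn; rewrite /act (big_ord_widen n (fun i => P`_i *: u (j + i%:Z))) //.
rewrite big_mkcond /=; apply: eq_bigr => i _; case: ltnP => // hi.
by rewrite nth_default // scale0r.
Qed.

Lemma act0 (C : archiClosedFieldType) (V : lmodType C) (u : int -> V) j :
  act 0 u j = 0.
Proof. by rewrite /act size_poly0 big_ord0. Qed.

Lemma actD (C : archiClosedFieldType) (V : lmodType C) (P Q : {poly C}) (u : int -> V) j :
  act (P + Q) u j = act P u j + act Q u j.
Proof.
pose n := maxn (size P) (size Q).
rewrite (@act_widen _ _ (P + Q) _ _ n); last by rewrite (leq_trans (size_polyD _ _)).
rewrite (@act_widen _ _ P _ _ n) ?leq_maxl // (@act_widen _ _ Q _ _ n) ?leq_maxr //.
by rewrite -big_split; apply: eq_bigr => i _; rewrite coefD scalerDl.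
Qed.

Lemma actCM (C : archiClosedFieldType) (V : lmodType C) (c : C) (P : {poly C}) (u : int -> V) j :
  act (c%:P * P) u j = c *: act P u j.
Proof.
rewrite (@act_widen _ _ _ _ _ (size P)); last by rewrite mul_polyC size_scale_leq.
rewrite /act scaler_sumr; apply: eq_bigr => i _; by rewrite coefCM scalerA.
Qed.

Lemma actC (C : archiClosedFieldType) (V : lmodType C) (c : C) (u : int -> V) j :
  act c%:P u j = c *: u j.
Proof.
by rewrite -[c%:P]mulr1 actCM (@act_widen _ _ _ _ _ 1) ?size_poly1 // big_ord1 coefC addr0 scale1r.
Qed.

Lemma actMX (C : archiClosedFieldType) (V : lmodType C) (P : {poly C}) (u : int -> V) j :
  act (P * 'X) u j = act P u (j + 1).
Proof.
rewrite (@act_widen _ _ _ _ _ (size P).+1); last first.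
  have [->|P0] := eqVneq P 0; first by rewrite mul0r size_poly0.
  by rewrite size_mulX.
rewrite big_ord_recl coefMX eqxx scale0r add0r /act.
apply: eq_bigr => i _; rewrite coefMX /= add0n /bump leq0n add1n; congr (_ *: u _); lia.
Qed.

Lemma actM (C : archiClosedFieldType) (V : lmodType C) (P Q : {poly C}) (u : int -> V) j :
  act (P * Q) u j = act P (act Q u) j.
Proof.
elim/poly_ind: P j => [|P c IH] j; first by rewrite mul0r !act0.
rewrite mulrDl -mulrA [_ * Q]mulrC mulrA actD actCM actMX IH.
by rewrite actD actMX actC.
Qed.

Lemma actXsubC (C : archiClosedFieldType) (V : lmodType C) (z : C) (u : int -> V) j :
  act ('X - z%:P) u j = u (j + 1) - z *: u j.
Proof.
rewrite -[X in act (X - _)]mul1r actD -polyCN actC -polyC1 actMX actC scale1r.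
by rewrite scaleNr.
Qed.

Lemma act_lin (C : archiClosedFieldType) (V : lmodType C) (P : {poly C}) (a b : C) (u w : int -> V) j :
  act P (fun k => a *: u k + b *: w k) j = a *: act P u j + b *: act P w j.
Proof.
rewrite /act !scaler_sumr -big_split; apply: eq_bigr => i _.
by rewrite scalerDr !scalerA [a * _]mulrC [b * _]mulrC.
Qed.

Lemma act_sum (C : archiClosedFieldType) (V : lmodType C) (I : Type) (r : seq I)
   (Pr : pred I) (P : {poly C}) (f : I -> int -> V) j :
  act P (fun k => \sum_(l <- r | Pr l) f l k) j = \sum_(l <- r | Pr l) act P (f l) j.
Proof.
rewrite /act exchange_big /=; apply: eq_bigr => i _; by rewrite scaler_sumr.
Qed.

Lemma act_tail (C : archiClosedFieldType) (V : lmodType C) (P : {poly C}) (u : int -> V) N :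
  (forall k, N <= k -> u k = 0) -> forall j, N <= j -> act P u j = 0.
Proof.
move=> h j hj; rewrite /act big1 // => i _; rewrite h ?scaler0 //; lia.
Qed.

Lemma act_ext (C : archiClosedFieldType) (V : lmodType C) (P : {poly C}) (u w : int -> V) N :
  (forall k, N <= k -> u k = w k) -> forall j, N <= j -> act P u j = act P w j.
Proof.
move=> h j hj; apply: eq_bigr => i _; rewrite h //; lia.
Qed.

Definition solve_eq (C : archiClosedFieldType) (V : lmodType C) (b : nat -> V) : nat -> V :=
  fun v => if v is v'.+1 then (v'.+1%:R : C)^-1 *: b v' else 0.

Fixpoint solve_g (C : archiClosedFieldType) (V : lmodType C) (a : C) (s : nat)
  (b : nat -> V) (t : nat) : V :=
  if t is t'.+1 then a^-1 *: (b (s - t)%N - (s - t')%N%:R *: solve_g a s b t') else 0.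

Definition solve_ne (C : archiClosedFieldType) (V : lmodType C) (z z0 : C) (s : nat)
  (b : nat -> V) : nat -> V :=
  fun v => if (v < s)%N then solve_g (z - z0) s b (s - v) else 0.

Lemma qp_ext (C : archiClosedFieldType) (V : lmodType C) z s (c c' : nat -> V) j :
  (forall v, (v < s)%N -> c v = c' v) -> qp z s c j = qp z s c' j.
Proof. by move=> h; apply: eq_bigr => v _; rewrite h. Qed.

Lemma qpD (C : archiClosedFieldType) (V : lmodType C) z s (c c' : nat -> V) j :
  qp z s (fun v => c v + c' v) j = qp z s c j + qp z s c' j.
Proof. by rewrite /qp -big_split; apply: eq_bigr => v _; rewrite scalerDr. Qed.

Lemma solve_eqP (C : archiClosedFieldType) (V : lmodType C) (z0 : C) s (b : nat -> V) j :
  z0 != 0 ->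
  qp z0 s.+1 (solve_eq b) (j+1) - z0 *: qp z0 s.+1 (solve_eq b) j = qp z0 s b j.
Proof.
move=> z0n; rewrite qp_shift // qp_top; last first.
  by rewrite /dshift subrr scale0r add0r ltnn scaler0.
apply: qp_ext => v vs; rewrite /dshift subrr scale0r add0r ltnS vs /solve_eq.
by rewrite scalerA mulfV ?scale1r // pnatr_eq0.
Qed.

Lemma solve_neP (C : archiClosedFieldType) (V : lmodType C) (z z0 : C) s (b : nat -> V) j :
  z != 0 -> z != z0 ->
  qp z s (solve_ne z z0 s b) (j+1) - z0 *: qp z s (solve_ne z z0 s b) j = qp z s b j.
Proof.
move=> zn zz0; rewrite qp_shift //; apply: qp_ext => v vs.
rewrite /dshift /solve_ne vs.
have -> : (s - v = (s - v.+1).+1)%N by lia.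
rewrite /= scalerA mulfV ?subr_eq0 // scale1r.
have -> : (s - (s - v.+1).+1 = v)%N by lia.
have -> : (s - (s - v.+1) = v.+1)%N by lia.
case: ltnP => h.
  by rewrite subrK.
have -> : (s - v.+1 = 0)%N by lia.
by rewrite /= !scaler0 subr0 addr0.
Qed.

Lemma geom_tail (C : archiClosedFieldType) (V : lmodType C) (y : C) (e : int -> V) N :
  (forall j, N <= j -> e (j + 1) - y *: e j = 0) ->
  forall k : nat, e (N + k%:Z) = y ^+ k *: e N.
Proof.
move=> h; elim=> [|k IH]; first by rewrite addr0 expr0 scale1r.
move/eqP: (h (N + k%:Z) ltac:(lia)); rewrite subr_eq0 IH scalerA -exprS => /eqP <-.
by congr e; lia.
Qed.

Lemma lmod_aux (C : archiClosedFieldType) (V : lmodType C) (a b c d : V) (y : C) :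
  (a - b) - y *: (c - d) = (a - y *: c) - (b - y *: d).
Proof. by rewrite scalerBr !opprB addrACA [RHS]addrACA [- b + _]addrC. Qed.

Lemma rec_solve (C : archiClosedFieldType) (V : lmodType C) (zs : seq C) :
  uniq zs -> (forall z, z \in zs -> z != 0) ->
  forall r : seq C, (forall y, y \in r -> y \in zs) ->
  forall (u : int -> V) (N : int),
  (forall j, N <= j -> act (\prod_(y <- r) ('X - y%:P)) u j = 0) ->
  exists c : C -> nat -> V,
    forall j, N <= j -> u j = \sum_(z <- zs) qp z (count_mem z r) (c z) j.
Proof.
move=> uzs nz0; elim=> [|y r IH] hr u N hu.
  exists (fun _ _ => 0) => j hj; rewrite big1 => [|z _]; last by apply: qp0.
  by have := hu j hj; rewrite big_nil -polyC1 actC scale1r.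
have yin : y \in zs by apply: hr; rewrite inE eqxx.
have y0 : y != 0 by apply: nz0.
pose v := act ('X - y%:P) u.
have [b hb] : exists b : C -> nat -> V,
    forall j, N <= j -> v j = \sum_(z <- zs) qp z (count_mem z r) (b z) j.
  apply: IH => [x xr|j hj]; first by apply: hr; rewrite inE xr orbT.
  by rewrite /v -actM; have := hu j hj; rewrite big_cons mulrC.
pose s := fun z => count_mem z (y :: r).
pose c' := fun z => if z == y then solve_eq (b z) else solve_ne z y (s z) (b z).
pose w := fun j => \sum_(z <- zs) qp z (s z) (c' z) j.
have hw : forall j, w (j + 1) - y *: w j = \sum_(z <- zs) qp z (count_mem z r) (b z) j.
  move=> j; rewrite /w scaler_sumr -sumrB; apply: eq_big_seq => z zin.
  rewrite /c' /s /=; case: eqVneq => [->|zy].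
    by rewrite add1n solve_eqP //; apply: nz0.
  by rewrite add0n solve_neP //; [apply: nz0 | rewrite eq_sym].
pose e := fun j => u j - w j.
have he : forall j, N <= j -> e (j + 1) - y *: e j = 0.
  move=> j hj; rewrite /e lmod_aux hw -actXsubC -/(v j) hb //; exact: subrr.
pose d0 := y ^ (- N) *: e N.
exists (fun z i => c' z i + (if (z == y) && (i == 0%N) then d0 else 0)) => j hj.
under eq_bigr => z _ do rewrite qpD.
rewrite big_split /= -/(w j) (bigD1_seq y) //= big1_seq; last first.
  move=> z /andP [zy _]; apply: qp0 => i _; by rewrite (negPf zy).
rewrite addr0 /qp eqxx add1n big_ord_recl big1; last first.
  by move=> i _ /=; rewrite scaler0.
rewrite /= addr0 Phi1.
have -> : y ^ j *: d0 = e j.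
  rewrite /d0 scalerA -expfzDr //.
  have -> : j - N = (`|j - N|%N)%:Z by lia.
  rewrite -exprnP -geom_tail //; congr e; lia.
by rewrite /e addrC subrK.
Qed.
Lemma sqnorm_ge0 (C : archiClosedFieldType) d (x : 'cV[C]_d) : 0 <= sqnorm x.
Proof. by apply: sumr_ge0 => m _; rewrite exprn_ge0. Qed.

Lemma sqnormZ (C : archiClosedFieldType) d (a : C) (x : 'cV[C]_d) :
  sqnorm (a *: x) = `|a| ^+ 2 * sqnorm x.
Proof.
by rewrite /sqnorm mulr_sumr; apply: eq_bigr => m _; rewrite mxE normrM exprMn.
Qed.

Lemma sqnorm_eq0 (C : archiClosedFieldType) d (x : 'cV[C]_d) : sqnorm x = 0 -> x = 0.
Proof.
move=> h; apply/matrixP => m k; rewrite (ord1 k) mxE.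
have := @psumr_eq0P _ _ predT (fun m => `|x m 0| ^+ 2) (fun m _ => exprn_ge0 _ (normr_ge0 _)) h m isT.
by move/eqP; rewrite expf_eq0 /= normr_eq0 => /eqP.
Qed.

Lemma sq_eps (C : archiClosedFieldType) (a b e : C) : 0 <= a -> 0 <= b -> 0 < e ->
  (a + b) ^+ 2 <= (1 + e) * a ^+ 2 + (1 + e^-1) * b ^+ 2.
Proof.
move=> a0 b0 e0; rewrite -subr_ge0.
have e0' : e != 0 by rewrite gt_eqF.
have -> : (1 + e) * a ^+ 2 + (1 + e^-1) * b ^+ 2 - (a + b) ^+ 2 = (e * a - b) ^+ 2 / e.
  by field.
apply: divr_ge0; last exact: ltW.
rewrite -realEsqr; apply: rpredB; apply: ger0_real => //.
by rewrite mulr_ge0 // ltW.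
Qed.

Lemma sqnorm_addeps (C : archiClosedFieldType) d (x y : 'cV[C]_d) (e : C) : 0 < e ->
  sqnorm (x + y) <= (1 + e) * sqnorm x + (1 + e^-1) * sqnorm y.
Proof.
move=> e0; rewrite /sqnorm !mulr_sumr -big_split /=; apply: ler_sum => m _.
rewrite mxE; apply: le_trans (sq_eps (normr_ge0 _) (normr_ge0 _) e0).
by rewrite lerXn2r ?nnegrE ?addr_ge0 // ler_normD.
Qed.

Lemma sqnorm_add (C : archiClosedFieldType) d (x y : 'cV[C]_d) :
  sqnorm (x + y) <= 2 * sqnorm x + 2 * sqnorm y.
Proof.
have := @sqnorm_addeps _ _ x y 1 ltr01; by rewrite invr1.
Qed.

Definition ssq (C : archiClosedFieldType) d (u : int -> 'cV[C]_d) (N : int) : Prop :=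
  exists M : C, forall n : nat, \sum_(i < n) sqnorm (u (N + i%:Z)) <= M.

Lemma ssq_ext (C : archiClosedFieldType) d (u w : int -> 'cV[C]_d) N :
  (forall k, N <= k -> u k = w k) -> ssq u N -> ssq w N.
Proof.
move=> h [M hM]; exists M => n.
rewrite (eq_bigr (fun i : 'I_n => sqnorm (u (N + i%:Z)))); first exact: hM.
by move=> i _; rewrite h //; lia.
Qed.

Lemma ssq_add (C : archiClosedFieldType) d (u w : int -> 'cV[C]_d) N :
  ssq u N -> ssq w N -> ssq (fun j => u j + w j) N.
Proof.
move=> [M1 h1] [M2 h2]; exists (2 * M1 + 2 * M2) => n.
apply: (@le_trans _ _ (\sum_(i < n) (2 * sqnorm (u (N+i%:Z)) + 2 * sqnorm (w (N + i%:Z))))).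
  by apply: ler_sum => i _; apply: sqnorm_add.
rewrite big_split /= -!mulr_sumr; apply: lerD; apply: ler_wpM2l; rewrite ?ler0n ?h1 ?h2 //.
Qed.

Lemma ssq_scale (C : archiClosedFieldType) d (u : int -> 'cV[C]_d) (a : C) N :
  ssq u N -> ssq (fun j => a *: u j) N.
Proof.
move=> [M h]; exists (`|a| ^+ 2 * M) => n.
under eq_bigr => i _ do rewrite sqnormZ.
by rewrite -mulr_sumr ler_wpM2l ?exprn_ge0.
Qed.

Lemma ssq_zero (C : archiClosedFieldType) d N : ssq (fun _ => 0 : 'cV[C]_d) N.
Proof.
exists 0 => n; rewrite big1 // => i _.
by rewrite /sqnorm big1 // => m _; rewrite mxE normr0 expr0n.
Qed.

Lemma ssq_shift (C : archiClosedFieldType) d (u : int -> 'cV[C]_d) N :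
  ssq u N -> ssq u (N + 1).
Proof.
move=> [M h]; exists M => n; apply: le_trans (h n.+1).
rewrite big_ord_recl.
rewrite (eq_bigr (fun i : 'I_n => sqnorm (u (N + (lift ord0 i)%:Z)))); last first.
  by move=> i _; congr (sqnorm (u _)); rewrite /= /bump /=; lia.
by rewrite lerDr sqnorm_ge0.
Qed.

Lemma psum_le (C : archiClosedFieldType) (F : nat -> C) m n :
  (forall i, 0 <= F i) -> (m <= n)%N -> \sum_(i < m) F i <= \sum_(i < n) F i.
Proof.
move=> h hmn; rewrite -!(big_mkord xpredT) (@big_cat_nat _ _ _ m 0 n _ _ (leq0n m) hmn) /=.
by rewrite lerDl sumr_ge0.
Qed.

Lemma ssq_mono (C : archiClosedFieldType) d (u : int -> 'cV[C]_d) N (k : nat) :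
  ssq u N -> ssq u (N + k%:Z).
Proof.
move=> h; elim: k => [|k IH]; first by rewrite addr0.
have -> : N + k.+1%:Z = (N + k%:Z) + 1 by lia.
exact: ssq_shift.
Qed.

Lemma ssq_reindex (C : archiClosedFieldType) d (u : int -> 'cV[C]_d) N (k : int) :
  ssq u (N + k) -> ssq (fun j => u (j + k)) N.
Proof.
move=> [M h]; exists M => n; apply: le_trans (h n); rewrite le_eqVlt; apply/orP; left.
apply/eqP; apply: eq_bigr => i _; congr (sqnorm (u _)); lia.
Qed.

Lemma ssq_sum (C : archiClosedFieldType) d (N : int) n (f : nat -> int -> 'cV[C]_d) :
  (forall i, (i < n)%N -> ssq (f i) N) -> ssq (fun j => \sum_(i < n) f i j) N.
Proof.
elim: n => [|n IH] h.
  by apply: (ssq_ext _ (@ssq_zero C d N)) => k _; rewrite big_ord0.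
apply: (ssq_ext _ (ssq_add (IH (fun i hi => h i (ltnW hi))) (h n (ltnSn n)))).
by move=> k _; rewrite big_ord_recr.
Qed.

Lemma ssq_act (C : archiClosedFieldType) d (P : {poly C}) (u : int -> 'cV[C]_d) N :
  ssq u N -> ssq (act P u) N.
Proof.
move=> h; apply: (@ssq_sum _ _ N (size P) (fun i j => P`_i *: u (j + i%:Z))) => i _.
apply: (@ssq_scale _ _ (fun j => u (j + i%:Z))); apply: ssq_reindex; exact: ssq_mono.
Qed.

Lemma ssq_fin (C : archiClosedFieldType) d (f : int -> 'cV[C]_d) N (K : nat) :
  (forall k, N + K%:Z <= k -> f k = 0) -> ssq f N.
Proof.
move=> h; exists (\sum_(i < K) sqnorm (f (N + i%:Z))) => n.
apply: le_trans (@psum_le _ (fun i => sqnorm (f (N + i%:Z))) n (n + K) (fun i => sqnorm_ge0 _) (leq_addr _ _)) _.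
rewrite -!(big_mkord xpredT (fun i => sqnorm (f (N + i%:Z)))).
rewrite (@big_cat_nat _ _ _ K 0 (n + K) _ _ (leq0n K) (leq_addl n K)) /= [X in _ + X]big_nat_cond [X in _ + X]big1 ?addr0 //.
move=> i /andP [/andP [hi _] _]; rewrite h; last by lia.
by rewrite /sqnorm big1 // => m _; rewrite mxE normr0 expr0n.
Qed.

Lemma ssq_kill (C : archiClosedFieldType) d (r : seq C) :
  (forall y, y \in r -> 1 <= `|y|) ->
  forall (v : int -> 'cV[C]_d) N, ssq v N ->
  (forall j, N <= j -> act (\prod_(y <- r) ('X - y%:P)) v j = 0) ->
  forall j, N <= j -> v j = 0.
Proof.
elim: r => [|y r IH] hr v N hv hact.
  by move=> j hj; have := hact j hj; rewrite big_nil -polyC1 actC scale1r.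
pose w := act ('X - y%:P) v.
have hw : forall j, N <= j -> w j = 0.
  apply: (IH _ w N (ssq_act _ hv)) => [x xr|j hj]; first by apply: hr; rewrite inE xr orbT.
  by rewrite /w -actM; have := hact j hj; rewrite big_cons mulrC.
have hy : 1 <= `|y| by apply: hr; rewrite inE eqxx.
have hg := @geom_tail _ _ y v N (fun j hj => etrans (esym (actXsubC _ _ _)) (hw j hj)).
have vN : v N = 0.
  apply: sqnorm_eq0; move: hv => [M hM].
  have M0 : 0 <= M by have := hM 0%N; rewrite big_ord0.
  have hb : forall n : nat, n%:R * sqnorm (v N) <= M.
    move=> n; apply: le_trans (hM n).
    have -> : n%:R * sqnorm (v N) = \sum_(i < n) sqnorm (v N).
      by rewrite sumr_const card_ord mulr_natl.
    apply: ler_sum => i _; rewrite hg sqnormZ normrX; apply: ler_peMl.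
      exact: sqnorm_ge0.
    by apply: exprn_ege1; apply: exprn_ege1.
  have x0 := sqnorm_ge0 (v N).
  apply/eqP; apply: contraT => xn0.
  have xp : 0 < sqnorm (v N) by rewrite lt_def xn0 x0.
  have := @archi_boundP _ (M / sqnorm (v N)) (divr_ge0 M0 x0).
  rewrite ltr_pdivrMr // => hlt; have := le_lt_trans (hb _) hlt.
  by move=> /(_ (Num.Def.archi_bound (M / sqnorm (v N)))); rewrite ltxx.
move=> j hj; have -> : j = N + (`|j - N|%N)%:Z by lia.
by rewrite hg vN scaler0.
Qed.

Lemma ssq_rec (C : archiClosedFieldType) d (z : C) (u : int -> 'cV[C]_d) N :
  `|z| < 1 -> ssq (fun j => u (j + 1) - z *: u j) N -> ssq u N.
Proof.
move=> hz [Mw hw].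
have Mw0 : 0 <= Mw by have := hw 0%N; rewrite big_ord0.
pose r := `|z| ^+ 2.
have r0 : 0 <= r by rewrite exprn_ge0.
have r1 : r < 1 by rewrite exprn_ilt1.
have r1p : 0 < 1 + r by apply: (lt_le_trans ltr01); rewrite lerDl.
pose e := (1 - r) / (1 + r).
have e0 : 0 < e by rewrite divr_gt0 // subr_gt0.
pose th := (1 + e) * r.
have the : 1 - th = e.
  rewrite /th /e; have : 1 + r != 0 by rewrite gt_eqF.
  by move=> h; field.
pose K := 1 + e^-1.
have K0 : 0 <= K by rewrite addr_ge0 // invr_ge0 ltW.
have th0 : 0 <= th by rewrite mulr_ge0 // addr_ge0 // ltW.
have pw : forall j, sqnorm (u (j + 1)) <= th * sqnorm (u j) + K * sqnorm (u (j + 1) - z *: u j).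
  move=> j; set w := u (j + 1) - z *: u j.
  have -> : u (j + 1) = z *: u j + w by rewrite /w [RHS]addrC subrK.
  apply: le_trans (sqnorm_addeps _ _ e0) _.
  by rewrite sqnormZ mulrA.
pose A := sqnorm (u N) + K * Mw.
pose S := fun n : nat => \sum_(i < n) sqnorm (u (N + i%:Z)).
have hS : forall n, S n <= A + th * S n.
  case=> [|n].
    rewrite /S big_ord0 mulr0 addr0 addr_ge0 ?sqnorm_ge0 //.
    exact: mulr_ge0.
  rewrite {1}/S big_ord_recl addr0 /A -addrA lerD2l.
  apply: (@le_trans _ _ (\sum_(i < n) (th * sqnorm (u (N + i%:Z)) + K * sqnorm (u (N + i%:Z + 1) - z *: u (N + i%:Z))))).
    apply: ler_sum => i _; apply: le_trans (pw (N + i%:Z)).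
    by rewrite le_eqVlt; apply/orP; left; apply/eqP; congr (sqnorm (u _)); rewrite /= /bump /=; lia.
  rewrite big_split /= -!mulr_sumr addrC; apply: lerD.
    by rewrite ler_wpM2l // hw.
  apply: ler_wpM2l => //; apply: (@psum_le _ (fun i => sqnorm (u (N + i%:Z)))) => // i; exact: sqnorm_ge0.
exists (A / e) => n; rewrite ler_pdivlMr // -the mulrBr mulr1 lerBlDr.
by move: (hS n); rewrite /S /= [th * _]mulrC.
Qed.

Lemma ssq_qp (C : archiClosedFieldType) d (z : C) s (c : nat -> 'cV[C]_d) N :
  z != 0 -> `|z| < 1 -> ssq (qp z s c) N.
Proof.
move=> z0 hz; elim: s c => [|s IH] c.
  by apply: (ssq_ext _ (@ssq_zero C d N)) => k _; rewrite /qp big_ord0.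
apply: ssq_rec hz _.
apply: (ssq_ext _ (IH (dshift z z s.+1 c))) => k _.
rewrite qp_shift // qp_top //.
by rewrite /dshift subrr scale0r add0r ltnn scaler0.
Qed.

Lemma act_psum (C : archiClosedFieldType) (V : lmodType C) (I : Type) (r : seq I)
   (Pr : pred I) (F : I -> {poly C}) (u : int -> V) j :
  act (\sum_(l <- r | Pr l) F l) u j = \sum_(l <- r | Pr l) act (F l) u j.
Proof.
exact: (big_morph (fun P => act P u j) (fun P Q => actD P Q u j) (act0 u j)).
Qed.

Lemma act_eq (C : archiClosedFieldType) (V : lmodType C) (P : {poly C}) (u w : int -> V) j :
  (forall k, u k = w k) -> act P u j = act P w j.
Proof. by move=> h; apply: eq_bigr => i _; rewrite h. Qed.

Definition comp (C : archiClosedFieldType) d (l : 'I_d) (psi : int -> 'cV[C]_d) : int -> C^o :=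
  fun k => psi k l 0.

Definition mact (C : archiClosedFieldType) d (M : 'M[{poly C}]_d) (psi : int -> 'cV[C]_d)
  : int -> 'cV[C]_d :=
  fun j => \col_i \sum_l act (M i l) (comp l psi) j.

Lemma mactM (C : archiClosedFieldType) d (A B : 'M[{poly C}]_d) (psi : int -> 'cV[C]_d) j :
  mact (A *m B) psi j = mact A (mact B psi) j.
Proof.
apply/matrixP => i k; rewrite !mxE.
under eq_bigr => l _ do rewrite mxE act_psum.
rewrite exchange_big /=; apply: eq_bigr => m _.
transitivity (act (A i m) (fun t => \sum_l act (B m l) (comp l psi) t) j).
  by rewrite act_sum; apply: eq_bigr => l _; rewrite actM.
by apply: (@act_eq C C^o) => t; rewrite /comp /mact mxE.
Qed.

Lemma act_vec (C : archiClosedFieldType) d (P : {poly C}) (psi : int -> 'cV[C]_d) j i :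
  act P psi j i 0 = act P (comp i psi) j.
Proof.
by rewrite /act summxE; apply: eq_bigr => t _; rewrite mxE.
Qed.

Lemma mact_scalar (C : archiClosedFieldType) d (D : {poly C}) (psi : int -> 'cV[C]_d) j :
  mact (D%:M) psi j = act D psi j.
Proof.
apply/matrixP => i k; rewrite (ord1 k) mxE (bigD1 i) //= big1 => [|l li]; last first.
  by rewrite mxE eq_sym (negPf li) mulr0n act0.
by rewrite mxE eqxx mulr1n addr0 act_vec.
Qed.

Definition Qm (C : archiClosedFieldType) d (p q : int) (a : int -> 'M[C]_d) : 'M[{poly C}]_d :=
  \matrix_(i < d, l < d) \sum_(k < (`|q - p|%N).+1) (a (p + k%:Z) i l)%:P * 'X^k.

Lemma Qm_det (C : archiClosedFieldType) d (p q : int) (a : int -> 'M[C]_d) :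
  shifted_symbol_det p q a = \det (Qm p q a).
Proof. by []. Qed.

Lemma Qm_entry (C : archiClosedFieldType) d (p q : int) (a : int -> 'M[C]_d) i l :
  Qm p q a i l = \poly_(k < (`|q - p|%N).+1) a (p + k%:Z) i l.
Proof. by rewrite mxE poly_def; apply: eq_bigr => k _; rewrite mul_polyC. Qed.

Lemma bbl_mact (C : archiClosedFieldType) d (p q : int) (a : int -> 'M[C]_d)
  (psi : int -> 'cV[C]_d) j :
  bbl p q a psi j = mact (Qm p q a) psi (j + p).
Proof.
apply/matrixP => i k; rewrite (ord1 k) /bbl summxE mxE.
under [RHS]eq_bigr => l _ do rewrite Qm_entry (act_widen _ _ (size_poly _ _)).
rewrite exchange_big /=; apply: eq_bigr => t _; rewrite mxE.
apply: eq_bigr => l _; rewrite coef_poly ltn_ord /comp /=.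
by rewrite addrA.
Qed.

Lemma mact_tail (C : archiClosedFieldType) d (M : 'M[{poly C}]_d) (psi : int -> 'cV[C]_d) N :
  (forall k, N <= k -> psi k = 0) -> forall j, N <= j -> mact M psi j = 0.
Proof.
move=> h j hj; apply/matrixP => i k; rewrite !mxE big1 // => l _.
by apply: act_tail hj => t ht; rewrite /comp h // mxE.
Qed.

Lemma bulk_det (C : archiClosedFieldType) d (p q : int) (a : int -> 'M[C]_d)
  (psi : int -> 'cV[C]_d) (N : int) :
  (forall j, N <= j -> bbl p q a psi j = 0) ->
  forall j, N + p <= j -> act (shifted_symbol_det p q a) psi j = 0.
Proof.
move=> h j hj; rewrite Qm_det -mact_scalar -mul_adj_mx mactM.
apply: mact_tail hj => t ht.
have -> : t = (t - p) + p by rewrite subrK.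
by rewrite -bbl_mact h //; lia.
Qed.

Lemma actZp (C : archiClosedFieldType) (V : lmodType C) (a : C) (P : {poly C}) (u : int -> V) j :
  act (a *: P) u j = a *: act P u j.
Proof. by rewrite -mul_polyC actCM. Qed.

Lemma zeros_kill (C : archiClosedFieldType) (V : lmodType C) (r : seq C) :
  forall (w : int -> V) N,
  (forall j, N <= j -> act (\prod_(y <- r | y == 0) ('X - y%:P)) w j = 0) ->
  forall j, N + (size r)%:Z <= j -> w j = 0.
Proof.
elim: r => [|y r IH] w N h.
  move=> j hj; rewrite /= addr0 in hj; have := h j hj; by rewrite big_nil -polyC1 actC scale1r.
move=> j hj; rewrite big_cons in h.
case: eqVneq h => [->|yn] h.
  apply: (IH w (N + 1)) => [k hk|]; last by move: hj => /=; lia.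
  have := h (k - 1) ltac:(lia); rewrite actM actXsubC scale0r subr0.
  by rewrite subrK.
apply: (IH w N h); move: hj => /=; lia.
Qed.

Lemma core_decomp (C : archiClosedFieldType) d (D : {poly C}) (zs : seq C)
  (psi : int -> 'cV[C]_d) N :
  D != 0 -> uniq zs -> (forall z, z \in zs <-> z != 0 /\ root D z) ->
  ssq psi N -> (forall j, N <= j -> act D psi j = 0) ->
  exists N' (c : C -> nat -> 'cV[C]_d), N <= N' /\
    forall j, N' <= j -> psi j = \sum_(z <- zs | `|z| < 1) qp z (mup z D) (c z) j.
Proof.
move=> D0 uzs hzs hss hD.
have [rs hrs] := closed_field_poly_normal D.
have lc0 : lead_coef D != 0 by rewrite lead_coef_eq0.
have hP : forall j, N <= j -> act (\prod_(y <- rs) ('X - y%:P)) psi j = 0.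
  move=> j hj; have := hD j hj; rewrite {1}hrs actZp => /eqP.
  by rewrite scaler_eq0 (negPf lc0) /= => /eqP.
pose r1 := [seq y <- rs | y != 0].
pose P1 := \prod_(y <- r1) ('X - y%:P).
pose N1 := N + (size rs)%:Z.
have hP1 : forall j, N1 <= j -> act P1 psi j = 0.
  apply: (zeros_kill (w := act P1 psi) (N := N)) => j hj.
  have := hP j (ltac:(lia)); rewrite (bigID (fun y => y == 0)) /= actM /P1 big_filter; exact.
pose rin := [seq y <- r1 | `|y| < 1].
pose rout := [seq y <- r1 | ~~ (`|y| < 1)].
pose Pin := \prod_(y <- rin) ('X - y%:P).
pose Pout := \prod_(y <- rout) ('X - y%:P).
have hss1 : ssq psi N1 by apply: ssq_mono.
have hin : forall j, N1 <= j -> act Pin psi j = 0.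
  apply: (ssq_kill (r := rout) _ (ssq_act Pin hss1)) => [y|j hj].
  - rewrite mem_filter => /andP [hy _]; rewrite real_leNgt ?real1 ?normr_real //.
  - have := hP1 j hj; rewrite /P1 (bigID (fun y => `|y| < 1)) /= mulrC actM /Pout /Pin !big_filter; exact.
have hrt : forall y, y \in rs -> y != 0 -> y \in zs.
  move=> y yin yn; apply/hzs; split => //.
  by rewrite hrs rootZ // root_prod_XsubC.
have zs'nz : forall z, z \in [seq z <- zs | `|z| < 1] -> z != 0.
  by move=> z; rewrite mem_filter => /andP [_ /hzs []].
have rinzs : forall y, y \in rin -> y \in [seq z <- zs | `|z| < 1].
  move=> y; rewrite !mem_filter => /andP [hy /andP [yn yin]].
  by rewrite hy hrt.
have [c hc] := rec_solve (filter_uniq _ uzs) zs'nz rinzs hin.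
exists N1, c; split; first by rewrite /N1; lia.
move=> j hj; rewrite hc // big_filter [LHS]big_seq_cond [RHS]big_seq_cond.
apply: eq_bigr => z /andP [zzs hz]; congr qp.
have zin : z != 0 by move/hzs: zzs => [].
rewrite hrs -mul_polyC mupMr ?rootC // mu_prod_XsubC.
rewrite /rin /r1 !count_filter; apply: eq_count => x /=.
by case: eqVneq => [->|] //=; rewrite hz zin.
Qed.

Lemma qp_shiftk (C : archiClosedFieldType) (V : lmodType C) (z : C) s (c : nat -> V) t (k : nat) :
  z != 0 -> qp z s c (t + k%:Z) = qp z s (iter k (dshift 0 z s) c) t.
Proof.
move=> z0; elim: k t => [|k IH] t; first by rewrite addr0.
have -> : t + k.+1%:Z = (t + 1) + k%:Z by lia.
rewrite IH; have := @qp_shift C V 0 z s (iter k (dshift 0 z s) c) t z0.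
by rewrite scale0r subr0 => ->.
Qed.

Definition actc (C : archiClosedFieldType) (V : lmodType C) (P : {poly C}) (z : C) s
  (c : nat -> V) : nat -> V :=
  fun v => \sum_(k < size P) P`_k *: iter k (dshift 0 z s) c v.

Lemma act_qp (C : archiClosedFieldType) (V : lmodType C) (P : {poly C}) (z : C) s
  (c : nat -> V) t :
  z != 0 -> act P (qp z s c) t = qp z s (actc P z s c) t.
Proof.
move=> z0; rewrite /act.
under eq_bigr => k _ do rewrite qp_shiftk //.
rewrite /qp /actc.
under eq_bigr => k _ do rewrite scaler_sumr.
rewrite exchange_big /=; apply: eq_bigr => v _.
rewrite scaler_sumr; apply: eq_bigr => k _.
by rewrite !scalerA mulrC.
Qed.

Lemma comp_qp (C : archiClosedFieldType) d (z : C) s (c : nat -> 'cV[C]_d) l t :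
  comp l (qp z s c) t = qp z s (fun v => (c v l 0 : C^o)) t.
Proof. by rewrite /comp /qp summxE; apply: eq_bigr => v _; rewrite mxE. Qed.

Definition macc (C : archiClosedFieldType) d (M : 'M[{poly C}]_d) (z : C) s
  (c : nat -> 'cV[C]_d) : nat -> 'cV[C]_d :=
  fun v => \col_i \sum_l actc (M i l) z s (fun w => (c w l 0 : C^o)) v.

Lemma mact_qp (C : archiClosedFieldType) d (M : 'M[{poly C}]_d) (z : C) s
  (c : nat -> 'cV[C]_d) t :
  z != 0 -> mact M (qp z s c) t = qp z s (macc M z s c) t.
Proof.
move=> z0; apply/matrixP => i k; rewrite (ord1 k) mxE.
transitivity (\sum_l qp z s (actc (M i l) z s (fun v => (c v l 0 : C^o))) t).
  apply: eq_bigr => l _; rewrite -act_qp //; apply: (@act_eq C C^o) => x; exact: comp_qp.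
rewrite /qp summxE.
under [RHS]eq_bigr => v _ do rewrite !mxE mulr_sumr.
rewrite exchange_big /=; apply: eq_bigr => l _.
by rewrite /qp; apply: eq_bigr => v _.
Qed.

Lemma mact_sum (C : archiClosedFieldType) d (M : 'M[{poly C}]_d) (I : Type) (r : seq I)
  (Pr : pred I) (f : I -> int -> 'cV[C]_d) t :
  mact M (fun j => \sum_(x <- r | Pr x) f x j) t = \sum_(x <- r | Pr x) mact M (f x) t.
Proof.
apply/matrixP => i k; rewrite !mxE summxE.
under [RHS]eq_bigr => x _ do rewrite mxE.
rewrite exchange_big /=; apply: eq_bigr => l _.
rewrite -(act_sum r Pr (M i l) (fun x => comp l (f x))); apply: (@act_eq C C^o) => y; by rewrite /comp summxE.
Qed.

Lemma mact_ext (C : archiClosedFieldType) d (M : 'M[{poly C}]_d) (u w : int -> 'cV[C]_d) N :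
  (forall k, N <= k -> u k = w k) -> forall j, N <= j -> mact M u j = mact M w j.
Proof.
move=> h j hj; apply/matrixP => i k; rewrite !mxE; apply: eq_bigr => l _.
by apply: (@act_ext C C^o _ _ _ N) => // t ht; rewrite /comp h.
Qed.

Lemma list_choice (T : eqType) (A : Type) (a0 : A) (P : T -> A -> Prop) (s : seq T) :
  (forall x, x \in s -> exists a, P x a) -> exists f : T -> A, forall x, x \in s -> P x (f x).
Proof.
elim: s => [|x s IH] h; first by exists (fun _ => a0).
have [a ha] := h x (mem_head _ _).
have [f hf] := IH (fun y ys => h y (@mem_behead _ (x :: s) _ ys)).
exists (fun y => if y == x then a else f y) => y; rewrite inE.
by case: eqVneq => [->|_] //= /hf.
Qed.

Lemma col_delta (C : archiClosedFieldType) d (x : 'cV[C]_d) :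
  x = \sum_(m < d) x m 0 *: delta_mx m 0.
Proof.
rewrite {1}(matrix_sum_delta x); apply: eq_bigr => m _.
by rewrite big_ord1.
Qed.

Lemma scal_vec (C : archiClosedFieldType) d (a : C) (x : 'cV[C]_d) :
  a *: x = \sum_(m < d) (x m 0 * a) *: delta_mx m 0.
Proof.
rewrite {1}(col_delta x) scaler_sumr; apply: eq_bigr => m _.
by rewrite scalerA mulrC.
Qed.

Lemma in_T_qp (C : archiClosedFieldType) d (z : C) s (phi : int -> 'cV[C]_d) :
  in_T z s phi -> exists c : nat -> 'cV[C]_d, forall j, phi j = qp z s c j.
Proof.
move=> [c hc].
exists (fun v => \col_m (\sum_(o : 'I_s | val o == v) c o m)) => j.
rewrite hc /qp; apply: eq_bigr => v _; rewrite scal_vec; apply: eq_bigr => m _.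
congr (_ *: _); rewrite mxE; congr (_ * _).
rewrite (big_pred1 v) // => o /=; exact: val_eqE.
Qed.

Lemma qp_in_T (C : archiClosedFieldType) d (z : C) s (c : nat -> 'cV[C]_d) :
  in_T z s (qp z s c).
Proof.
exists (fun v m => c v m 0) => j; rewrite /qp; apply: eq_bigr => v _.
by rewrite scal_vec.
Qed.

Lemma iterPT (C : archiClosedFieldType) d (psi : int -> 'cV[C]_d) (k : nat) j :
  1 <= j -> iter k (fun phi => projLinf 1 (shiftT phi)) psi j = psi (j + k%:Z).
Proof.
elim: k j => [|k IH] j hj; first by rewrite addr0.
rewrite /= /projLinf hj /shiftT IH; last by lia.
congr psi; lia.
Qed.

Lemma F1minus_fin (C : archiClosedFieldType) d p q (a : int -> 'M[C]_d) (f : int -> 'cV[C]_d) :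
  F1minus p q a f -> exists k : nat, forall j, 1 + k%:Z <= j -> f j = 0.
Proof.
move=> [_ [k [_ hk]]]; exists k => j hj.
have := congr1 (fun g => g (j - k%:Z)) hk; rewrite /= iterPT; last by lia.
by rewrite subrK.
Qed.

Lemma bblB (C : archiClosedFieldType) d p q (a : int -> 'M[C]_d) (u w : int -> 'cV[C]_d) j :
  bbl p q a (fun t => u t - w t) j = bbl p q a u j - bbl p q a w j.
Proof. by rewrite /bbl -sumrB; apply: eq_bigr => k _; rewrite mulmxBr. Qed.

Lemma bblD (C : archiClosedFieldType) d p q (a : int -> 'M[C]_d) (u w : int -> 'cV[C]_d) j :
  bbl p q a (fun t => u t + w t) j = bbl p q a u j + bbl p q a w j.
Proof. by rewrite /bbl -big_split; apply: eq_bigr => k _; rewrite mulmxDr. Qed.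

Lemma bbl_sum (C : archiClosedFieldType) d p q (a : int -> 'M[C]_d) (I : Type) (r : seq I)
  (Pr : pred I) (f : I -> int -> 'cV[C]_d) j :
  bbl p q a (fun t => \sum_(x <- r | Pr x) f x t) j = \sum_(x <- r | Pr x) bbl p q a (f x) j.
Proof.
rewrite bbl_mact mact_sum; apply: eq_bigr => x _; by rewrite bbl_mact.
Qed.

Lemma bbl_ext (C : archiClosedFieldType) d p q (a : int -> 'M[C]_d) (u w : int -> 'cV[C]_d) N :
  (forall k, N <= k -> u k = w k) -> forall j, N - p <= j -> bbl p q a u j = bbl p q a w j.
Proof.
move=> h j hj; rewrite !bbl_mact; apply: mact_ext h _ _; lia.
Qed.

Lemma ssq_sumseq (C : archiClosedFieldType) d (I : eqType) (r : seq I) (Pr : pred I)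
  (f : I -> int -> 'cV[C]_d) (N : int) :
  (forall x, x \in r -> Pr x -> ssq (f x) N) -> ssq (fun j => \sum_(x <- r | Pr x) f x j) N.
Proof.
elim: r => [|x r IH] h.
  by apply: (ssq_ext _ (@ssq_zero C d N)) => k _; rewrite big_nil.
have IH' := IH (fun y yr => h y (@mem_behead _ (x :: r) _ yr)).
case hx: (Pr x).
  apply: (ssq_ext _ (ssq_add (h x (mem_head _ _) hx) IH')) => k _.
  by rewrite big_cons hx.
by apply: (ssq_ext _ IH') => k _; rewrite big_cons hx.
Qed.

Lemma inH_ssq (C : archiClosedFieldType) d (psi : int -> 'cV[C]_d) :
  in_H psi -> ssq psi 1.
Proof.
move=> [_ [M hM]]; exists M => n; apply: le_trans (hM n).
rewrite big_add1 /= big_mkord le_eqVlt; apply/orP; left; apply/eqP.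
apply: eq_bigr => i _; congr (sqnorm (psi _)); lia.
Qed.

Lemma ssq_inH (C : archiClosedFieldType) d (psi : int -> 'cV[C]_d) :
  in_V1inf psi -> ssq psi 1 -> in_H psi.
Proof.
move=> h0 [M hM]; split => //; exists M => n; apply: le_trans (hM n).
rewrite big_add1 /= big_mkord le_eqVlt; apply/orP; left; apply/eqP.
apply: eq_bigr => i _; congr (sqnorm (psi _)); lia.
Qed.

Lemma pprime_le (p : int) : pprime p <= p.
Proof. by rewrite /pprime ge_min lexx. Qed.

Lemma iterPT_neg (C : archiClosedFieldType) d (psi : int -> 'cV[C]_d) (k : nat) j :
  j < 1 -> iter k.+1 (fun phi => projLinf 1 (shiftT phi)) psi j = 0.
Proof. by move=> hj; rewrite /= /projLinf; case: ifP => //; lia. Qed.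

Lemma bbl_eq (C : archiClosedFieldType) d p q (a : int -> 'M[C]_d) (u w : int -> 'cV[C]_d) j :
  (forall k, u k = w k) -> bbl p q a u j = bbl p q a w j.
Proof. by move=> h; rewrite /bbl; apply: eq_bigr => k _; rewrite h. Qed.

Unset Implicit Arguments.

Theorem mainTheorem18 (C : archiClosedFieldType) (d : nat) (p q : int)
    (a : int -> 'M[C]_d) (zs : seq C) :
  (0 < d)%N -> p <= q -> a p != 0 -> a q != 0 ->
  regular p q a ->
  uniq zs ->
  (forall z : C, z \in zs <-> nonzero_root_of_det p q a z) ->
  let K := fun (z : C) (psi : vseq C d) =>
             in_kerA p q a psi /\ in_T z (root_mult p q a z) psi in
  (* (1) inner directness *)
  (forall phi : C -> vseq C d,
     (forall z, z \in zs -> `|z| < 1 -> K z (phi z)) ->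
     (forall j, \sum_(z <- zs | `|z| < 1) phi z j = 0) ->
     forall z, z \in zs -> `|z| < 1 -> phi z = (fun _ => 0)) /\
  (* (2) outer directness *)
  (forall (f : vseq C d) (phi : C -> vseq C d),
     F1minus p q a f ->
     (forall z, z \in zs -> `|z| < 1 -> K z (phi z)) ->
     (forall j, f j + projLinf 1 (fun i => \sum_(z <- zs | `|z| < 1) phi z i) j = 0) ->
     f = (fun _ => 0) /\
     projLinf 1 (fun i => \sum_(z <- zs | `|z| < 1) phi z i) = (fun _ => 0)) /\
  (* (3) the decomposition *)
  (forall psi : vseq C d,
     (M1inf p q a psi /\ in_H psi) <->
     exists (f : vseq C d) (phi : C -> vseq C d),
       [/\ F1minus p q a f,
           (forall z, z \in zs -> `|z| < 1 -> K z (phi z)) &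
           forall j, psi j = f j + projLinf 1 (fun i => \sum_(z <- zs | `|z| < 1) phi z i) j]).
Proof.
move=> d0 hpq hap haq hreg uzs hzs K.
pose D := shifted_symbol_det p q a.
have D0 : D != 0 := hreg.
have hzs' : forall z, z \in zs <-> z != 0 /\ root D z by move=> z; exact: hzs z.
have nz : forall z, z \in zs -> z != 0 by move=> z /hzs' [].
pose zs' := [seq z <- zs | `|z| < 1].
have uzs' : uniq zs' := filter_uniq _ uzs.
have nz' : forall z, z \in zs' -> z != 0.
  by move=> z; rewrite mem_filter => /andP [_ /nz].
pose s := fun z => mup z D.
have coefs : forall phi : C -> vseq C d, (forall z, z \in zs -> `|z| < 1 -> K z (phi z)) ->
    exists c : C -> nat -> 'cV[C]_d, forall z, z \in zs' -> forall j, phi z j = qp z (s z) (c z) j.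
  move=> phi hK; apply: (@list_choice _ _ (fun _ => 0) (fun z (c : nat -> 'cV[C]_d) => forall j, phi z j = qp z (s z) c j)) => z; rewrite mem_filter => /andP [hz zin].
  have [_ hT] := hK z zin hz; exact: in_T_qp hT.
have sum_rw : forall (phi : C -> vseq C d) (c : C -> nat -> 'cV[C]_d),
    (forall z, z \in zs' -> forall j, phi z j = qp z (s z) (c z) j) ->
    forall j, \sum_(z <- zs | `|z| < 1) phi z j = \sum_(z <- zs') qp z (s z) (c z) j.
  move=> phi c hc j; rewrite big_filter [LHS]big_seq_cond [RHS]big_seq_cond.
  by apply: eq_bigr => z /andP [zin hz]; rewrite hc // mem_filter hz zin.
split.
  move=> phi hK hsum z zin hz.
  have [c hc] := coefs phi hK.
  have zz : z \in zs' by rewrite mem_filter hz zin.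
  have h0 := @qp_indep C _ zs' uzs' nz' s c 0 (fun j _ => etrans (esym (sum_rw phi c hc j)) (hsum j)).
  apply: functional_extensionality => j; rewrite hc // qp0 // => v vs; exact: h0.
split.
  move=> f phi hf hK h.
  have [c hc] := coefs phi hK.
  have [k hk] := F1minus_fin hf.
  have hg : forall j, 1 + k%:Z <= j -> \sum_(z <- zs') qp z (s z) (c z) j = 0.
    move=> j hj; have := h j; rewrite hk // add0r /projLinf; case: ifP => [_|]; last by lia.
    by rewrite (sum_rw phi c hc).
  have hc0 := @qp_indep C _ zs' uzs' nz' s c _ hg.
  have gz : forall j, \sum_(z <- zs | `|z| < 1) phi z j = 0.
    move=> j; rewrite (sum_rw phi c hc) big1_seq // => z /andP [_ zin].
    by apply: qp0 => v vs; apply: hc0 zin v vs.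
  have Pz : projLinf 1 (fun i => \sum_(z <- zs | `|z| < 1) phi z i) = (fun _ => 0).
    by apply: functional_extensionality => j; rewrite /projLinf gz; case: ifP.
  split => //; apply: functional_extensionality => j; have := h j; by rewrite Pz addr0.
move=> psi; split.
  move=> [[hV hbulk] hH].
  have bulk : forall j, 1 - pprime p <= j -> bbl p q a psi j = 0.
    by move=> j hj; have := congr1 (fun g => g j) hbulk; rewrite /= /projLinf hj.
  pose N0 := 1 - pprime p + p.
  have hD : forall j, N0 <= j -> act D psi j = 0 := bulk_det bulk.
  pose N := 1 + (`|N0|%N)%:Z.
  have hssN : ssq psi N := ssq_mono (`|N0|%N) (inH_ssq hH).
  have [N' [c [hN' hdec]]] := core_decomp D0 uzs hzs' hssN (fun j hj => hD j ltac:(rewrite /N in hj; lia)).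
  pose phi := fun z => qp z (s z) (c z).
  have hpp := pprime_le p.
  have hker : forall z, z \in zs -> `|z| < 1 -> in_kerA p q a (phi z).
    pose cc := fun z => macc (Qm p q a) z (s z) (c z).
    have hsum0 : forall t, N' <= t -> \sum_(z <- zs') qp z (s z) (cc z) t = 0.
      move=> t ht.
      rewrite (eq_big_seq (fun z => mact (Qm p q a) (phi z) t)); last first.
        by move=> z zin; rewrite /phi mact_qp // nz'.
      rewrite big_filter -mact_sum.
      rewrite (@mact_ext _ _ _ _ psi N'); last 2 first.
        - by move=> k hk; rewrite hdec.
        - exact: ht.
      have -> : t = (t - p) + p by rewrite subrK.
      rewrite -bbl_mact bulk //; rewrite /N /N0 in hN'; lia.
    have hcc := @qp_indep C _ zs' uzs' nz' s cc _ hsum0.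
    move=> z zin hz; apply: functional_extensionality => j.
    rewrite bbl_mact /phi mact_qp ?nz // qp0 // => v vs; apply: hcc v vs.
    by rewrite mem_filter hz zin.
  pose g := fun i => \sum_(z <- zs | `|z| < 1) phi z i.
  exists (fun j => psi j - projLinf 1 g j), phi; split.
  - split.
      split.
        by move=> j hj; rewrite hV // /projLinf; case: ifP; [lia| rewrite subr0].
      apply: functional_extensionality => j; rewrite /projLinf; case: ifP => // hj.
      rewrite bblB bulk // sub0r (@bbl_ext _ _ _ _ _ _ g 1); last 2 first.
        - by move=> k hk; rewrite /projLinf hk.
        - lia.
      rewrite bbl_sum big1_seq ?oppr0 // => z /andP [hz zin].
      by have := congr1 (fun h => h j) (hker z zin hz).
    exists (`|N'|%N).+1; split => //; apply: functional_extensionality => j.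
    case: (ltP j 1) => hj; first exact: iterPT_neg.
    rewrite iterPT // /projLinf; case: ifP => [_|]; last by lia.
    by rewrite hdec ?subrr //; lia.
  - move=> z zin hz; split; first exact: hker.
    exact: qp_in_T.
  - by move=> j; rewrite subrK.
move=> [f [phi [hf hK hpsi]]].
have [c hc] := coefs phi hK.
have [k hk] := F1minus_fin hf.
have [[hfV hfb] _] := hf.
have fbulk : forall j, 1 - pprime p <= j -> bbl p q a f j = 0.
  by move=> j hj; have := congr1 (fun g => g j) hfb; rewrite /= /projLinf hj.
have hpp := pprime_le p.
pose g := fun i => \sum_(z <- zs | `|z| < 1) phi z i.
have hV : in_V1inf psi.
  by move=> j hj; rewrite hpsi hfV // /projLinf; case: ifP; [lia | rewrite addr0].
split.
  split => //; apply: functional_extensionality => j; rewrite /projLinf; case: ifP => // hj.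
  rewrite (@bbl_eq _ _ p q a psi (fun t => f t + projLinf 1 g t) j hpsi) bblD fbulk // add0r (@bbl_ext _ _ _ _ _ _ g 1); last 2 first.
    - by move=> t ht; rewrite /projLinf ht.
    - lia.
  rewrite bbl_sum big1_seq // => z /andP [hz zin].
  have [hkz _] := hK z zin hz.
  by have := congr1 (fun h => h j) hkz.
apply: ssq_inH => //.
apply: (ssq_ext (u := fun j => f j + projLinf 1 g j)); first by move=> t _; rewrite hpsi.
apply: ssq_add; first by apply: (ssq_fin (K := k)) => t ht; apply: hk; lia.
apply: (ssq_ext (u := g)); first by move=> t ht; rewrite /projLinf ht.
apply: ssq_sumseq => z zin hz.
apply: (ssq_ext (u := qp z (s z) (c z))).
  by move=> t _; rewrite hc // mem_filter hz zin.
by apply: ssq_qp => //; apply: nz.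
Qed.
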